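(* Consider a position in the $K^4$-building game on a complete graph board $G$ in which it is the first player's turn. Suppose that $G$ contains a realised promising graph $H$ (of one of the six types described in the context), and suppose that there is no monochromatic $K^4$ on the board and no threat by the second player on the board, even if the vulnerable edges of $H$ are additionally regarded as edges claimed by the second player. Then the first player can play a sequence of moves, each of which creates a threat, the last of which creates two threats simultaneously; consequently the first player wins the game.
   Context: The $K^4$-building game on a complete graph $G$ (the board): two players, the first player (red) and the second player (blue), starting with the first player, alternately claim one not-yet-claimed edge of $G$ in their own colour. A player wins as soon as she/he has claimed all six edges on some set of four vertices; if neither ever does, the second player wins. A threat (by a player) is a set of four vertices of the board on which that player has claimed exactly five of the six edges and the sixth edge is unclaimed. Promising graphs. Each type below is a complete graph on the listed vertices with a colouring of some edges; red = claimed by the first player, blue = claimed by the second player, all other edges among the listed vertices are unclaimed, and certain edges are designated vulnerable. Type 1: vertices $a,b,c,d,e$; red $ab,ac,ad,ae,bc,cd$; blue $bd$; no vulnerable edges. Type 2: vertices $a,b,c,d,e$; red $ab,ac,ad,ae,bc$; vulnerable edge $bd$. Type 3: vertices $a,b,c,d,e,f$; red $ab,ac,ad,ae,af,bc$; blue $bd,be$; vulnerable edges $bf, ce$. Type 4: vertices $a,b,c,d,e,f$; red $ab,ac,ad,ae,af,bc$; blue $bd,ef$; vulnerable edges $be,bf$. Type 5: vertices $a,b,c,d,e,f,g$; red $ab,ac,ad,ae,af,ag,bc$; blue $bd,be,bf,ce,df$; vulnerable edges $bg,cd,cf$. Type 6: vertices $a,b,c,d,e,f,g$; red $ab,ac,ad,ae,af,ag,bc$;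 blue $bd,be,bf,cd,ce$; vulnerable edges $bg,cf,ef$. A promising graph of a given type is the coloured complete graph of that type in which additionally the vulnerable edges are claimed by the second player. A realised promising graph in the board $G$ is a set of vertices of $G$ such that the complete subgraph of $G$ on it, with the current claimed edges, is isomorphic (as an edge-coloured graph) to one of the six types above with the vulnerable edges unclaimed; i.e. among these vertices the claimed edges are exactly the red and blue edges listed, and the vulnerable edges (as well as all other unlisted edges) are unclaimed. *)

(* Defs.v *)
From mathcomp Require Import all_boot.
Set Implicit Arguments.
Unset Strict Implicit.
Unset Printing Implicit Defensive.

Inductive cell := Free | Red | Blue.

Section Game.
Variable V : eqType.  (* vertex set of the complete-graph board (possibly infinite) *)

(** A position: colour of the edge {x,y}; meaningful for x <> y, and
    required to be symmetric (see [sym_pos]). *)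
Definition pos := V -> V -> cell.

Definition sym_pos (p : pos) : Prop := forall x y, p x y = p y x.

Definition claim (p : pos) (s t : V) (k : cell) : pos :=
  fun x y => if ((x == s) && (y == t)) || ((x == t) && (y == s)) then k else p x y.

Definition mono_K4 (p : pos) (k : cell) : Prop :=
  exists a b c d, uniq [:: a; b; c; d] /\
    [/\ p a b = k, p a c = k, p a d = k, p b c = k & p b d = k /\ p c d = k].

Definition threat (p : pos) (k : cell) (u v w x : V) : Prop :=
  uniq [:: u; v; w; x] /\ p u v = Free /\
    [/\ p u w = k, p u x = k, p v w = k, p v x = k & p w x = k].

Definition has_threat (p : pos) (k : cell) : Prop :=
  exists u v w x, threat p k u v w x.

Definition same_edge (u v u' v' : V) : bool :=
  ((u == u') && (v == v')) || ((u == v') && (v == u')).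

Definition creates_threat (p : pos) (s t : V) : Prop :=
  exists u v w x, threat (claim p s t Red) Red u v w x /\ ~ threat p Red u v w x.

(** [forcing_win p]: with Red to move in [p], Red can play a sequence of
    moves each creating a threat, Blue's reply being forced (all red
    threats share one unclaimed edge, which Blue must claim, and Blue has no
    threat of her own), the last move creating threats with two different
    unclaimed edges while Blue has no threat. *)
Inductive forcing_win : pos -> Prop :=
| fw_double (p : pos) (s t : V) :
    s != t -> p s t = Free ->
    ~ has_threat (claim p s t Red) Blue ->
    creates_threat p s t ->
    (exists u v w x u' v' w' x',
        threat (claim p s t Red) Red u v w x /\
        threat (claim p s t Red) Red u' v' w' x' /\ ~~ same_edge u v u' v') ->
    forcing_win p
| fw_single (p : pos) (s t u v : V) :
    s != t -> p s t = Free ->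
    ~ has_threat (claim p s t Red) Blue ->
    creates_threat p s t ->
    (exists w x, threat (claim p s t Red) Red u v w x) ->
    (forall u' v' w' x', threat (claim p s t Red) Red u' v' w' x' ->
        same_edge u v u' v') ->
    forcing_win (claim (claim p s t Red) u v Blue) ->
    forcing_win p.

(** [red_wins p]: with Red (the first player) to move in [p], Red has a
    strategy that wins (completes a red K^4 before Blue completes a blue
    K^4, within finitely many moves, whatever Blue does). If all edges are
    claimed and nobody has won, the second player wins. *)
Inductive red_wins : pos -> Prop :=
| rw_win (p : pos) (s t : V) :
    s != t -> p s t = Free -> mono_K4 (claim p s t Red) Red -> red_wins p
| rw_step (p : pos) (s t : V) :
    s != t -> p s t = Free ->
    (exists u v, u != v /\ claim p s t Red u v = Free) ->
    (forall u v, u != v -> claim p s t Red u v = Free ->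
       ~ mono_K4 (claim (claim p s t Red) u v Blue) Blue /\
       red_wins (claim (claim p s t Red) u v Blue)) ->
    red_wins p.

End Game.

(** Vertices a,b,c,d,e,f,g are encoded as 0,1,2,3,4,5,6. *)
Inductive ptype := T1 | T2 | T3 | T4 | T5 | T6.

Definition pt_n (T : ptype) : nat :=
  match T with T1 | T2 => 5 | T3 | T4 => 6 | T5 | T6 => 7 end.

Definition pt_red (T : ptype) : seq (nat * nat) :=
  match T with
  | T1 => [:: (0,1); (0,2); (0,3); (0,4); (1,2); (2,3)]
  | T2 => [:: (0,1); (0,2); (0,3); (0,4); (1,2)]
  | T3 | T4 => [:: (0,1); (0,2); (0,3); (0,4); (0,5); (1,2)]
  | T5 | T6 => [:: (0,1); (0,2); (0,3); (0,4); (0,5); (0,6); (1,2)]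
  end.

Definition pt_blue (T : ptype) : seq (nat * nat) :=
  match T with
  | T1 => [:: (1,3)]
  | T2 => [::]
  | T3 => [:: (1,3); (1,4)]
  | T4 => [:: (1,3); (4,5)]
  | T5 => [:: (1,3); (1,4); (1,5); (2,4); (3,5)]
  | T6 => [:: (1,3); (1,4); (1,5); (2,3); (2,4)]
  end.

Definition pt_vul (T : ptype) : seq (nat * nat) :=
  match T with
  | T1 => [::]
  | T2 => [:: (1,3)]
  | T3 => [:: (1,5); (2,4)]
  | T4 => [:: (1,4); (1,5)]
  | T5 => [:: (1,6); (2,3); (2,5)]
  | T6 => [:: (1,6); (2,5); (4,5)]
  end.

Definition in_pairs (i j : nat) (l : seq (nat * nat)) : bool :=
  ((i, j) \in l) || ((j, i) \in l).

(** Colour of the pair {i,j} in the type-T template, vulnerable edges being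
    unclaimed. *)
Definition pt_colour (T : ptype) (i j : nat) : cell :=
  if in_pairs i j (pt_red T) then Red
  else if in_pairs i j (pt_blue T) then Blue else Free.

Definition realised (V : eqType) (p : pos V) (T : ptype) (f : nat -> V) : Prop :=
  (forall i j, i < pt_n T -> j < pt_n T -> f i = f j -> i = j) /\
  (forall i j, i < pt_n T -> j < pt_n T -> i != j -> p (f i) (f j) = pt_colour T i j).

(** The position with the vulnerable edges of the realised H additionally
    regarded as claimed by the second player. *)
Definition with_vulnerable (V : eqType) (p : pos V) (T : ptype) (f : nat -> V) : pos V :=
  foldr (fun ij q => claim q (f ij.1) (f ij.2) Blue) p (pt_vul T).

(* Main.v *)
Require Import Defs.
From mathcomp Require Import all_boot.
From Stdlib Require Import Classical FunctionalExtensionality.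

Set Implicit Arguments.
Unset Strict Implicit.
Unset Printing Implicit Defensive.

Definition ceq (a b : cell) : bool :=
  match a, b with Free, Free | Red, Red | Blue, Blue => true | _, _ => false end.
Lemma ceqP a b : reflect (a = b) (ceq a b).
Proof. by case: a; case: b; constructor. Qed.

Section Gen.
Variable V : eqType.
Implicit Types (q r : pos V) (s t u v w x a b y z : V).

Lemma claim_sym_pos q s t k : sym_pos q -> sym_pos (claim q s t k).
Proof.
move=> Hq x y; rewrite /claim [q x y]Hq.
by case: (x == s); case: (x == t); case: (y == s); case: (y == t).
Qed.

Lemma claim_swap q s t k : claim q s t k = claim q t s k.
Proof.
apply: functional_extensionality => x; apply: functional_extensionality => y.
by rewrite /claim orbC.
Qed.

Lemma claim_other q s t k x y : ~~ same_edge x y s t -> claim q s t k x y = q x y.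
Proof. by rewrite /claim /same_edge => /negbTE ->. Qed.

Lemma same_edgeC a b u v : same_edge a b u v = same_edge u v a b.
Proof.
by apply/idP/idP; rewrite /same_edge => /orP [] /andP [/eqP -> /eqP ->];
  rewrite !eqxx ?orbT.
Qed.

Lemma same_edge_trans a b u v u' v' :
  same_edge a b u v -> same_edge a b u' v' -> same_edge u v u' v'.
Proof.
rewrite /same_edge => /orP [] /andP [/eqP <- /eqP <-] /orP [] /andP [/eqP <- /eqP <-];
by rewrite !eqxx ?orbT.
Qed.

Lemma claimR_blue q s t y z : claim q s t Red y z = Blue -> q y z = Blue.
Proof. by rewrite /claim; case: ifP. Qed.

Lemma claimR_keep q s t y z : q y z = Red -> claim q s t Red y z = Red.
Proof. by rewrite /claim; case: ifP. Qed.

Lemma claimB_keepR q a b y z : sym_pos q -> q a b = Free -> q y z = Red ->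
  claim q a b Blue y z = Red.
Proof.
move=> Hs Hab; rewrite /claim; case: ifP => // /orP [] /andP [/eqP -> /eqP ->].
  by rewrite Hab.
by rewrite Hs Hab.
Qed.

Lemma red_claim_noblue q s t : mono_K4 (claim q s t Red) Blue -> mono_K4 q Blue.
Proof.
move=> [a [b [c [d [Hu [H1 H2 H3 H4 [H5 H6]]]]]]].
exists a, b, c, d; split=> //; split; try split; eapply claimR_blue; eassumption.
Qed.

Definition allk r k (s : seq V) :=
  forall y z, y \in s -> z \in s -> y != z -> r y z = k.

Lemma mono_all r k : sym_pos r -> mono_K4 r k ->
  exists a b c d, uniq [:: a; b; c; d] /\ allk r k [:: a; b; c; d].
Proof.
move=> Hs [a [b [c [d [Hu [H1 H2 H3 H4 [H5 H6]]]]]]].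
exists a, b, c, d; split=> // y z; rewrite !inE.
move=> /or4P [] /eqP -> /or4P [] /eqP -> ; rewrite ?eqxx // => _;
  first [done | by rewrite Hs].
Qed.

Lemma uniq4 (a b c d : V) : uniq [:: a; b; c; d] ->
  [/\ a != b, a != c, a != d, b != c & b != d /\ c != d].
Proof.
rewrite /= !inE !negb_or => /andP [/and3P [? ? ?] /andP [/andP [? ?] /andP [? _]]].
by split.
Qed.

Lemma all_mono r k a b c d : uniq [:: a; b; c; d] -> allk r k [:: a; b; c; d] ->
  mono_K4 r k.
Proof.
move=> Hu H; have := uniq4 Hu; case=> D1 D2 D3 D4 [D5 D6].
exists a, b, c, d; split=> //.
by split; try split; apply: H; rewrite ?inE ?eqxx ?orbT.
Qed.

Lemma K4_after_blue q a b : sym_pos q -> q a b = Free -> a != b ->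
  mono_K4 (claim q a b Blue) Blue -> mono_K4 q Blue \/ has_threat q Blue.
Proof.
move=> Hs Hab Hne /(mono_all (claim_sym_pos a b Blue Hs)) [a0 [b0 [c0 [d0 [Hu Hall]]]]].
set s := [:: a0; b0; c0; d0] in Hu Hall.
case: (boolP ((a \in s) && (b \in s))) => [/andP [Ha Hb] | Hn].
- right.
  have P1 := perm_to_rem Ha.
  have Hb' : b \in rem a s by rewrite (mem_rem_uniq _ Hu) inE eq_sym Hne.
  have P2 := perm_to_rem Hb'.
  have Hsz : size (rem b (rem a s)) = 2 by rewrite !size_rem.
  move: P2 Hsz; case: (rem b (rem a s)) => [|w [|x [|? ?]]] //= P2 _.
  have P3 : perm_eq s [:: a; b; w; x].
    apply: (perm_trans P1); by rewrite perm_cons.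
  have Hu' : uniq [:: a; b; w; x] by rewrite -(perm_uniq P3).
  have Hm : forall y, y \in [:: a; b; w; x] -> y \in s by move=> y; rewrite (perm_mem P3).
  have [D1 D2 D3 D4 [D5 D6]] := uniq4 Hu'.
  have E : forall y z, y \in [:: a; b; w; x] -> z \in [:: a; b; w; x] -> y != z ->
     z != a -> z != b -> q y z = Blue.
    move=> y z Hy Hz Hyz Hza Hzb.
    have Hse : ~~ same_edge y z a b.
      by rewrite /same_edge (negbTE Hzb) (negbTE Hza) !andbF.
    rewrite -(claim_other q Blue Hse).
    by apply: Hall => //; apply: Hm.
  exists a, b, w, x; split=> //; split=> //.
  split; apply: E; rewrite ?inE ?eqxx ?orbT // 1?eq_sym //.
- left; apply: (all_mono Hu) => y z Hy Hz Hyz.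
  have Hse : ~~ same_edge y z a b.
    apply: contra Hn; rewrite /same_edge => /orP [] /andP [/eqP <- /eqP <-].
      by rewrite Hy Hz.
    by rewrite Hy Hz.
  by rewrite -(claim_other q Blue Hse); apply: Hall.
Qed.

Lemma threat_win q1 u v w x a b : sym_pos q1 -> threat q1 Red u v w x ->
  q1 a b = Free -> ~~ same_edge a b u v -> red_wins (claim q1 a b Blue).
Proof.
move=> Hs [Hu [Huv [H1 H2 H3 H4 H5]]] Hab Hse.
have [Hne ? ? ? [? ?]] := uniq4 Hu.
apply: (rw_win (s := u) (t := v)) => //.
  by rewrite claim_other // same_edgeC.
exists u, v, w, x; split=> //.
have K : forall y z, q1 y z = Red -> claim (claim q1 a b Blue) u v Red y z = Red.
  by move=> y z Hyz; apply: claimR_keep; apply: claimB_keepR.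
split; try split; try (apply: K; done).
rewrite /claim /= !eqxx //.
Qed.

Lemma fw_rw q : forcing_win q -> sym_pos q -> ~ mono_K4 q Blue -> red_wins q.
Proof.
elim=> {q} [q s t Hst Hf Hnb Hc [u [v [w [x [u' [v' [w' [x' [T1 [T2 Hne]]]]]]]]]]
          | q s t u v Hst Hf Hnb Hc [w [x Hthr]] Hall _ IH] Hs Hnm.
- have Hs1 : sym_pos (claim q s t Red) by exact: claim_sym_pos.
  apply: (rw_step Hst Hf).
    exists u, v; case: T1 => Hu [Huv _]; have [? _ _ _ _] := uniq4 Hu; by split.
  move=> a b Hab Hfab; split.
    by move=> /(K4_after_blue Hs1 Hfab Hab) [/red_claim_noblue|].
  case: (boolP (same_edge a b u v)) => He.
    apply: threat_win Hs1 T2 Hfab _; apply: contra Hne => He'.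
    exact: same_edge_trans He He'.
  exact: threat_win Hs1 T1 Hfab He.
- have Hs1 : sym_pos (claim q s t Red) by exact: claim_sym_pos.
  apply: (rw_step Hst Hf).
    exists u, v; case: Hthr => Hu [Huv _]; have [? _ _ _ _] := uniq4 Hu; by split.
  move=> a b Hab Hfab.
  have Hnm2 : ~ mono_K4 (claim (claim q s t Red) a b Blue) Blue.
    by move=> /(K4_after_blue Hs1 Hfab Hab) [/red_claim_noblue|].
  split=> //.
  case: (boolP (same_edge a b u v)) => He.
    have E : claim (claim q s t Red) a b Blue = claim (claim q s t Red) u v Blue.
      move: He; rewrite /same_edge => /orP [] /andP [/eqP -> /eqP ->] //.
      exact: claim_swap.
    rewrite E; apply: IH; first exact: claim_sym_pos.
    by rewrite -E.
  exact: threat_win Hs1 Hthr Hfab He.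
Qed.

End Gen.

Definition claimN (L : nat -> nat -> cell) (s t : nat) (k : cell) : nat -> nat -> cell :=
  fun i j => if ((i == s) && (j == t)) || ((i == t) && (j == s)) then k else L i j.

Definition threatN (L : nat -> nat -> cell) (k : cell) (u v w x : nat) : bool :=
  [&& uniq [:: u; v; w; x], ceq (L u v) Free, ceq (L u w) k, ceq (L u x) k,
      ceq (L v w) k, ceq (L v x) k & ceq (L w x) k].

Inductive smove := SM (s t u v w x : nat).
Inductive fmove := FM (s t u v w x u2 v2 w2 x2 : nat).

Definition ltn_all (n : nat) (l : seq nat) := all (fun i => i < n) l.

Definition checkF n (L : nat -> nat -> cell) (m : fmove) : bool :=
  let: FM s t u v w x u2 v2 w2 x2 := m in
  [&& ltn_all n [:: s; t; u; v; w; x; u2; v2; w2; x2], s != t, ceq (L s t) Free,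
      threatN (claimN L s t Red) Red u v w x, ~~ threatN L Red u v w x,
      threatN (claimN L s t Red) Red u2 v2 w2 x2 & ~~ same_edge u v u2 v2].

Fixpoint checkS n (vul : seq (nat * nat)) (L : nat -> nat -> cell) (ms : seq smove)
  (fin : fmove) : bool :=
  match ms with
  | [::] => checkF n L fin
  | SM s t u v w x :: ms' =>
    [&& ltn_all n [:: s; t; u; v; w; x], s != t, ceq (L s t) Free,
        threatN (claimN L s t Red) Red u v w x, ~~ threatN L Red u v w x,
        in_pairs u v vul & checkS n vul (claimN (claimN L s t Red) u v Blue) ms' fin]
  end.

Section Emb.
Variables (V : eqType) (f : nat -> V) (n : nat).
Hypothesis inj : forall i j, i < n -> j < n -> f i = f j -> i = j.

Lemma feq i j : i < n -> j < n -> (f i == f j) = (i == j).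
Proof. by move=> Hi Hj; apply/eqP/eqP => [/inj|->]; auto. Qed.

Definition agree (q : pos V) L :=
  forall i j, i < n -> j < n -> i != j -> q (f i) (f j) = L i j.

Lemma agree_claim q L s t k : s < n -> t < n -> agree q L ->
  agree (claim q (f s) (f t) k) (claimN L s t k).
Proof. by move=> Hs Ht H i j Hi Hj Hij; rewrite /claim /claimN !feq // H. Qed.

Lemma threat_agree q L k u v w x : agree q L -> ltn_all n [:: u; v; w; x] ->
  threat q k (f u) (f v) (f w) (f x) <-> threatN L k u v w x.
Proof.
move=> H /= /and5P [Hu Hv Hw Hx _].
have U : uniq [:: f u; f v; f w; f x] = uniq [:: u; v; w; x].
  rewrite -[[:: f u; f v; f w; f x]]/(map f [:: u; v; w; x]).
  apply: map_inj_in_uniq => i j /= Hi Hj /inj; apply.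
    by move: Hi; rewrite !inE => /or4P [] /eqP ->.
  by move: Hj; rewrite !inE => /or4P [] /eqP ->.
rewrite /threat /threatN U.
case: (boolP (uniq [:: u; v; w; x])) => Hun; last by split => [[]|].
have [D1 D2 D3 D4 [D5 D6]] := uniq4 Hun.
rewrite !H //=.
split.
  by move=> [_ [-> [-> -> -> -> ->]]]; case: k.
by move=> /and5P [/ceqP -> /ceqP -> /ceqP -> /ceqP -> /andP [/ceqP -> /ceqP ->]].
Qed.

Variables (wv : pos V) (vul : seq (nat * nat)).
Hypothesis Hvul : forall i j, in_pairs i j vul -> wv (f i) (f j) = Blue.
Hypothesis Hnt : ~ has_threat wv Blue.
Hypothesis Hnm : ~ mono_K4 wv Blue.

Definition dom (q : pos V) := forall x y,
  (q x y = Blue -> wv x y = Blue) /\ (q x y = Free -> wv x y <> Red).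

Lemma dom_nothreat q : dom q -> ~ has_threat q Blue.
Proof.
move=> D [u [v [w [x [Hu [Huv [H1 H2 H3 H4 H5]]]]]]].
have [_ F] := D u v.
move: (F Huv); case E : (wv u v); move=> HH; [|by case: HH|].
  apply: Hnt; exists u, v, w, x; split=> //; split=> //.
  by split; apply: (proj1 (D _ _)).
apply: Hnm; exists u, v, w, x; split=> //.
by split; try split; first [exact E | apply: (proj1 (D _ _)); assumption].
Qed.

Lemma dom_red q s t : dom q -> dom (claim q s t Red).
Proof. by move=> D x y; rewrite /claim; case: ifP => // _; apply: D. Qed.

Lemma dom_blue q i j : in_pairs i j vul -> dom q -> dom (claim q (f i) (f j) Blue).
Proof.
move=> Hij D x y; rewrite /claim; case: ifP => [/orP [] /andP [/eqP -> /eqP ->]|_].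
- by rewrite Hvul.
- by rewrite Hvul // /in_pairs orbC.
- exact: D.
Qed.

Lemma check_fw ms : forall q L fin, agree q L -> dom q -> checkS n vul L ms fin ->
  forcing_win q.
Proof.
elim: ms => [|[s t u v w x] ms IH] q L fin HA HD /=.
- case: fin => s t u v w x u2 v2 w2 x2 /=.
  move=> /and5P [Hlt Hst /ceqP Hf Ht1 /andP [Hn1 /andP [Ht2 Hse]]].
  move: Hlt => /= /and5P [Hs Ht Hu Hv /and5P [Hw Hx Hu2 Hv2 /andP [Hw2 /andP [Hx2 _]]]].
  have HA1 := agree_claim Red Hs Ht HA.
  have L1 : ltn_all n [:: u; v; w; x] by rewrite /= Hu Hv Hw Hx.
  have T1 : threat (claim q (f s) (f t) Red) Red (f u) (f v) (f w) (f x).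
    by apply/(threat_agree Red HA1 L1).
  apply: (fw_double (s := f s) (t := f t)).
  + by rewrite feq.
  + by rewrite HA.
  + exact/dom_nothreat/dom_red.
  + exists (f u), (f v), (f w), (f x); split=> //.
    move/(threat_agree Red HA L1) => Ho.
    by rewrite Ho in Hn1.
  + exists (f u), (f v), (f w), (f x), (f u2), (f v2), (f w2), (f x2); split=> //.
    split.
      have L2 : ltn_all n [:: u2; v2; w2; x2] by rewrite /= Hu2 Hv2 Hw2 Hx2.
      by apply/(threat_agree Red HA1 L2).
    by rewrite /same_edge !feq.
- move=> /and5P [Hlt Hst /ceqP Hf Ht1 /andP [Hn1 /andP [Hvu Hrest]]].
  move: Hlt => /= /and5P [Hs Ht Hu Hv /andP [Hw /andP [Hx _]]].
  have HA1 := agree_claim Red Hs Ht HA.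
  have L1 : ltn_all n [:: u; v; w; x] by rewrite /= Hu Hv Hw Hx.
  have T1 : threat (claim q (f s) (f t) Red) Red (f u) (f v) (f w) (f x).
    by apply/(threat_agree Red HA1 L1).
  have Hsn : f s != f t by rewrite feq.
  have Hfr : q (f s) (f t) = Free by rewrite HA.
  have Hnb : ~ has_threat (claim q (f s) (f t) Red) Blue.
    exact/dom_nothreat/dom_red.
  have Hc : creates_threat q (f s) (f t).
    exists (f u), (f v), (f w), (f x); split=> //.
    move/(threat_agree Red HA L1) => Ho.
    by rewrite Ho in Hn1.
  case: (classic (exists u' v' w' x', threat (claim q (f s) (f t) Red) Red u' v' w' x'
                   /\ ~~ same_edge (f u) (f v) u' v')) => [[u' [v' [w' [x' [T2 Hne]]]]]|Hno].
    apply: (fw_double Hsn Hfr Hnb Hc).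
    by exists (f u), (f v), (f w), (f x), u', v', w', x'.
  apply: (fw_single (u := f u) (v := f v) Hsn Hfr Hnb Hc).
  + by exists (f w), (f x).
  + move=> u' v' w' x' T2; apply/negPn/negP => Hne.
    by apply: Hno; exists u', v', w', x'.
  + apply: (IH _ (claimN (claimN L s t Red) u v Blue) fin) => //.
      exact: agree_claim.
    exact/dom_blue/dom_red.
Qed.

End Emb.

Section WV.
Variables (V : eqType) (f : nat -> V).

Definition wvf (p : pos V) (l : seq (nat * nat)) :=
  foldr (fun ij q => claim q (f ij.1) (f ij.2) Blue) p l.

Lemma wvf_val p l x y : wvf p l x y = p x y \/ wvf p l x y = Blue.
Proof.
elim: l => [|[i j] l IH] /=; first by left.
rewrite /claim; case: ifP => _; [by right | exact: IH].
Qed.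

Lemma wvf_in p l i j : (i, j) \in l -> wvf p l (f i) (f j) = Blue /\ wvf p l (f j) (f i) = Blue.
Proof.
elim: l => [|[i0 j0] l IH] //=; rewrite inE => /orP [/eqP [-> ->]|/IH [H1 H2]].
  by rewrite /claim /= !eqxx /= orbT.
by rewrite /claim /=; split; case: ifP.
Qed.

End WV.

Definition strat (T : ptype) : seq smove * fmove :=
  match T with
  | T1 => ([::], FM 2 4 1 4 0 2 3 4 0 2)
  | T2 => ([:: SM 2 3 1 3 0 2], FM 2 4 1 4 0 2 3 4 0 2)
  | T3 => ([:: SM 2 5 1 5 0 2; SM 4 5 2 4 0 5], FM 3 5 2 3 0 5 3 4 0 5)
  | T4 => ([:: SM 2 4 1 4 0 2; SM 2 5 1 5 0 2], FM 2 3 3 4 0 2 3 5 0 2)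
  | T5 => ([:: SM 2 6 1 6 0 2; SM 3 6 2 3 0 6; SM 5 6 2 5 0 6], FM 4 6 3 4 0 6 4 5 0 6)
  | T6 => ([:: SM 2 6 1 6 0 2; SM 5 6 2 5 0 6; SM 4 6 4 5 0 6], FM 3 6 3 4 0 6 3 5 0 6)
  end.

Lemma strat_ok T : checkS (pt_n T) (pt_vul T) (pt_colour T) (strat T).1 (strat T).2.
Proof. by case: T; vm_compute. Qed.

Theorem lemma3p2 (V : eqType) (p : pos V) (T : ptype) (f : nat -> V) :
  sym_pos p ->
  realised p T f ->
  ~ mono_K4 p Red -> ~ mono_K4 p Blue -> ~ has_threat p Blue ->
  ~ mono_K4 (with_vulnerable p T f) Red ->
  ~ mono_K4 (with_vulnerable p T f) Blue ->
  ~ has_threat (with_vulnerable p T f) Blue ->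
  forcing_win p /\ red_wins p.
Proof.
move=> Hs [Hinj Hag] _ HnB _ _ HwB HwT.
have Hfw : forcing_win p.
  apply: (@check_fw V f (pt_n T) Hinj (with_vulnerable p T f) (pt_vul T) _ HwT HwB
            (strat T).1 p (pt_colour T) (strat T).2 Hag _ (strat_ok T)).
  - move=> i j; rewrite /in_pairs => /orP [/(wvf_in f p) [] //|/(wvf_in f p) [] //].
  - move=> x y; have := wvf_val f p (pt_vul T) x y.
    rewrite /wvf -/(with_vulnerable p T f) => [[->|->]] //; split => //.
    by move=> ->.
split=> //; exact: fw_rw.
Qed.
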